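(* Let $F,G\in\mathbb{A}$ and $\tilde H\in\mathbb{A}_q$ be as in the BQTRU key setting below, so that $\tilde H\equiv F^{-1}\circ G+\vartheta\pmod q$. Let $$\chi=\{\tau'\in\mathbb{A}: \exists F'\in\mathbb{A},\ \exists\alpha'\in\mathbb{A}\ \text{with}\ F\circ F'=F'\circ F\equiv 1+\alpha'\circ\tau'\!\!\pmod q\ \text{and}\ \tilde H\equiv F'\circ G+\tau'\!\!\pmod q\}.$$ Then for every $\tau'\in\chi$ with $\tau'\neq\vartheta$, $\|\overrightarrow{\rho(\tau')}\|_H>4|T|$.
   Context: Setting: $n$ prime, $p,q$ distinct primes with $\gcd(p,q)=\gcd(n,q)=1$ and $n\mid(q-1)$. $R'=\mathbb{Z}[x,y]/\langle x^n-1,y^n-1\rangle$, $R'_q=\mathbb{Z}_q[x,y]/\langle x^n-1,y^n-1\rangle$; $\mathbb{A},\mathbb{A}_q,\mathbb{L}_q$ are the quaternion algebras over $R'$, $R'_q$, $\mathbb{Z}_q$ (free module on $1,i,j,k$, scalars central, $i^2=j^2=1$, $i\circ j=-j\circ i=k$); ''$\pmod q$'' means equality after reducing coefficients mod $q$. $E=\{(a,b)\in\mathbb{Z}_q^2:a^n=b^n=1\}$, enumerated $(a_1,b_1),\dots,(a_{n^2},b_{n^2})$; $\lambda_{a,b}(x,y)=\frac{ab}{n^2}\cdot\frac{x^n-1}{x-a}\cdot\frac{y^n-1}{y-b}$ over $\mathbb{Z}_q$. For $F\in\mathbb{A}$ (reduced mod $q$) and $(a,b)\in E$, $F(a,b)\in\mathbb{L}_q$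 is componentwise evaluation, and $\overrightarrow{\rho(F)}\in\mathbb{Z}_q^{4n^2}$ is the vector $(\rho(f_0),\rho(f_1),\rho(f_2),\rho(f_3))$ with $\rho(f_t)=(f_t(a_1,b_1),\dots,f_t(a_{n^2},b_{n^2}))$; $\|\cdot\|_H$ is the Hamming weight (number of nonzero coordinates). Key setting: $G=g_0+g_1i+g_2j+g_3k$ and $F=f_0+f_1i+f_2j+f_3k$ with all $f_t,g_t$ ternary (coefficients in $\{-1,0,1\}$); $T=\bigcap_{t=0}^3\{(a,b)\in E: g_t(a,b)=0\}\ne\emptyset$, with the enumeration chosen so that $T=\{(a_1,b_1),\dots,(a_{|T|},b_{|T|})\}$; $\{(a,b)\in E: N(F)(a,b)=0\}\subseteq T$ where $N(F)=f_0^2-f_1^2-f_2^2-f_3^2$. $\sigma=\sum_{i=1}^{|T|}q_i\lambda_{a_i,b_i}$ with $q_i\in\mathbb{Z}_q$ nonzero; $Q=\langle q,\sigma\rangle\subseteq R'$, $J=Q+Qi+Qj+Qk$; $F^{-1}\in\mathbb{A}$ satisfies $F\circ F^{-1}=F^{-1}\circ F\equiv 1\pmod J$. $W=w_0+w_1i+w_2j+w_3k\in\mathbb{L}_q$ is invertible with $w_0,w_1,w_2,w_3\ne0$; $\vartheta=W\circ\sigma$, and $\tilde H\equiv F^{-1}\circ G+\vartheta\pmod q$. *)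

(* Defs.v *)
From HB Require Import structures.
From mathcomp Require Import all_boot all_order all_algebra.
Set Implicit Arguments. Unset Strict Implicit. Unset Printing Implicit Defensive.
Import Order.TTheory GRing.Theory Num.Theory.
Local Open Scope ring_scope.

(* R' = R[x,y]/<x^n-1,y^n-1> represented by coefficient arrays:
   f i j = coefficient of x^i y^j, 0 <= i,j < n. *)
Definition Rp (R : nzRingType) (n : nat) := 'M[R]_n.

Definition pmul (R : nzRingType) (n : nat) (a b : 'M[R]_n) : 'M[R]_n :=
  \matrix_(i, j) \sum_(k : 'I_n * 'I_n)
     \sum_(l : 'I_n * 'I_n | ((k.1 + l.1) %% n == i)%N && ((k.2 + l.2) %% n == j)%N)
       a k.1 k.2 * b l.1 l.2.

Definition pconst (R : nzRingType) (n : nat) (c : R) : 'M[R]_n :=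
  \matrix_(i, j) (if ((i : nat) == 0%N) && ((j : nat) == 0%N) then c else 0).

Definition predq (q n : nat) (f : 'M[int]_n) : 'M['F_q]_n :=
  map_mx (fun z : int => (z%:~R : 'F_q)) f.

Definition peval (q n : nat) (f : 'M['F_q]_n) (e : 'F_q * 'F_q) : 'F_q :=
  \sum_(i < n) \sum_(j < n) f i j * e.1 ^+ i * e.2 ^+ j.

(* quaternion algebra: free module on 1,i,j,k with i^2 = j^2 = 1, ij = -ji = k *)
Record quat (T : Type) := Quat { qc0 : T; qc1 : T; qc2 : T; qc3 : T }.

Definition qadd (T : zmodType) (A B : quat T) : quat T :=
  Quat (qc0 A + qc0 B) (qc1 A + qc1 B) (qc2 A + qc2 B) (qc3 A + qc3 B).

Definition qmul (T : zmodType) (mul : T -> T -> T) (A B : quat T) : quat T :=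
  let a0 := qc0 A in let a1 := qc1 A in let a2 := qc2 A in let a3 := qc3 A in
  let b0 := qc0 B in let b1 := qc1 B in let b2 := qc2 B in let b3 := qc3 B in
  Quat (mul a0 b0 + mul a1 b1 + mul a2 b2 - mul a3 b3)
       (mul a0 b1 + mul a1 b0 - mul a2 b3 + mul a3 b2)
       (mul a0 b2 + mul a2 b0 + mul a1 b3 - mul a3 b1)
       (mul a0 b3 + mul a3 b0 + mul a1 b2 - mul a2 b1).

Definition qmap (T U : Type) (f : T -> U) (A : quat T) : quat U :=
  Quat (f (qc0 A)) (f (qc1 A)) (f (qc2 A)) (f (qc3 A)).

Definition qscal (T : zmodType) (s : T) : quat T := Quat s 0 0 0.

Definition Amul (n : nat) := @qmul (Rp int n) (@pmul int n).
Definition Aqmul (q n : nat) := @qmul (Rp 'F_q n) (@pmul 'F_q n).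
Definition Lqmul (q : nat) := @qmul 'F_q *%R.
Definition Aone (n : nat) : quat (Rp int n) := qscal (pconst n 1).
Definition Lqone (q : nat) : quat 'F_q := qscal 1.

Definition qred (q n : nat) (A : quat (Rp int n)) : quat (Rp 'F_q n) :=
  qmap (@predq q n) A.

Definition ternary (n : nat) (f : 'M[int]_n) : Prop :=
  forall i j, f i j \in [:: -1; 0; 1].
Definition qternary (n : nat) (A : quat (Rp int n)) : Prop :=
  [/\ ternary (qc0 A), ternary (qc1 A), ternary (qc2 A) & ternary (qc3 A)].

Definition Eset (q n : nat) : {set 'F_q * 'F_q} :=
  [set e | (e.1 ^+ n == 1) && (e.2 ^+ n == 1)].

Definition lam (q n : nat) (e : 'F_q * 'F_q) : 'M['F_q]_n :=
  \matrix_(i, j) (e.1 * e.2 / (n%:R ^+ 2)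
     * ((('X^n - 1) %/ ('X - e.1%:P)) : {poly 'F_q})`_i
     * ((('X^n - 1) %/ ('X - e.2%:P)) : {poly 'F_q})`_j).

Definition qnorm (n : nat) (F : quat (Rp int n)) : 'M[int]_n :=
  pmul (qc0 F) (qc0 F) - pmul (qc1 F) (qc1 F) - pmul (qc2 F) (qc2 F)
  - pmul (qc3 F) (qc3 F).

(* membership in Q = <q, sigma> subset R' : r mod q is a multiple of sigma in R'_q *)
Definition inQ (q n : nat) (sigma : 'M['F_q]_n) (r : 'M[int]_n) : Prop :=
  exists c : 'M['F_q]_n, predq q r = pmul c sigma.

(* X = Y (mod J), J = Q + Qi + Qj + Qk *)
Definition eqmodJ (q n : nat) (sigma : 'M['F_q]_n) (X Y : quat (Rp int n)) : Prop :=
  [/\ inQ sigma (qc0 X - qc0 Y), inQ sigma (qc1 X - qc1 Y),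
      inQ sigma (qc2 X - qc2 Y) & inQ sigma (qc3 X - qc3 Y)].

(* Hamming weight of rho(X) in Z_q^{4 n^2}: number of (t,(a,b)) with
   (a,b) in E and x_t(a,b) <> 0 *)
Definition rho_weight (q n : nat) (X : quat (Rp 'F_q n)) : nat :=
  addn (addn (addn #|[set e in Eset q n | peval (qc0 X) e != 0]|
                   #|[set e in Eset q n | peval (qc1 X) e != 0]|)
             #|[set e in Eset q n | peval (qc2 X) e != 0]|)
       #|[set e in Eset q n | peval (qc3 X) e != 0]|.

(* Main.v *)
Require Import Defs.
From HB Require Import structures.
From mathcomp Require Import all_boot all_order all_algebra all_fingroup all_solvable all_field.
From mathcomp Require Import ring.
Set Implicit Arguments. Unset Strict Implicit. Unset Printing Implicit Defensive.
Import Order.TTheory GRing.Theory Num.Theory.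
Local Open Scope ring_scope.

Section Ev.
Variables (q n : nat).
Hypothesis n_gt0 : (0 < n)%N.
Local Notation K := 'F_q.

Lemma pevalD (f g : 'M[K]_n) e : peval (f + g) e = peval f e + peval g e.
Proof.
rewrite /peval -big_split; apply: eq_bigr => i _; rewrite -big_split.
by apply: eq_bigr => j _; rewrite !mxE !mulrDl.
Qed.

Lemma pevalN (f : 'M[K]_n) e : peval (- f) e = - peval f e.
Proof.
rewrite /peval -sumrN; apply: eq_bigr => i _; rewrite -sumrN.
by apply: eq_bigr => j _; rewrite !mxE !mulNr.
Qed.

Lemma pevalB (f g : 'M[K]_n) e : peval (f - g) e = peval f e - peval g e.
Proof. by rewrite pevalD pevalN. Qed.

Lemma peval0 e : peval (0 : 'M[K]_n) e = 0.
Proof. by rewrite /peval big1 // => i _; rewrite big1 // => j _; rewrite mxE !mul0r. Qed.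

Lemma pevalZ c (f : 'M[K]_n) e : peval (c *: f) e = c * peval f e.
Proof.
rewrite /peval mulr_sumr; apply: eq_bigr => i _; rewrite mulr_sumr.
by apply: eq_bigr => j _; rewrite !mxE !mulrA.
Qed.

Lemma peval_sum (I : finType) (P : pred I) (F : I -> 'M[K]_n) e :
  peval (\sum_(i | P i) F i) e = \sum_(i | P i) peval (F i) e.
Proof.
exact: (big_morph (fun f => peval f e) (fun f g => pevalD f g e) (peval0 e)).
Qed.

Lemma peval_pconst (c : K) e : peval (pconst n c) e = c.
Proof.
rewrite /peval (bigD1 (Ordinal n_gt0)) //= (bigD1 (Ordinal n_gt0)) //= big1; last first.
  by move=> j /negbTE hj; rewrite mxE /= -[(j : nat) == 0%N]/(j == Ordinal n_gt0) hj !mul0r.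
rewrite big1; last first.
  move=> i /negbTE hi; rewrite big1 // => j _.
  by rewrite mxE -[(i : nat) == 0%N]/(i == Ordinal n_gt0) hi /= !mul0r.
by rewrite mxE /= !expr0 !mulr1 !addr0.
Qed.

Lemma peval_pair (f : 'M[K]_n) e :
  peval f e = \sum_(p : 'I_n * 'I_n) f p.1 p.2 * (e.1 ^+ p.1 * e.2 ^+ p.2).
Proof.
rewrite /peval pair_bigA /=; apply: eq_bigr => p _; by rewrite mulrA.
Qed.

Lemma peval_pmul (a b : 'M[K]_n) e : e.1 ^+ n = 1 -> e.2 ^+ n = 1 ->
  peval (pmul a b) e = peval a e * peval b e.
Proof.
move=> h1 h2.
rewrite !peval_pair.
under eq_bigr => p _ do rewrite mxE mulr_suml.
rewrite exchange_big /= mulr_suml; apply: eq_bigr => k _.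
under eq_bigr => p _ do rewrite mulr_suml big_mkcond.
rewrite exchange_big /= mulr_sumr; apply: eq_bigr => l _.
rewrite -big_mkcond /=.
pose p0 : 'I_n * 'I_n := (Ordinal (ltn_pmod (k.1 + l.1) n_gt0), Ordinal (ltn_pmod (k.2 + l.2) n_gt0)).
rewrite (big_pred1 p0); last first.
  case=> [[u hu] [v hv]]; rewrite /p0 /= xpair_eqE /=.
  by rewrite (eq_sym _ u) (eq_sym _ v).
rewrite /p0 /= !expr_mod // !exprD.
by ring.
Qed.

Lemma predqD (f g : 'M[int]_n) : predq q (f + g) = predq q f + predq q g.
Proof. by apply/matrixP => i j; rewrite !mxE intrD. Qed.
Lemma predqN (f : 'M[int]_n) : predq q (- f) = - predq q f.
Proof. by apply/matrixP => i j; rewrite !mxE intrN. Qed.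
Lemma predqB (f g : 'M[int]_n) : predq q (f - g) = predq q f - predq q g.
Proof. by rewrite predqD predqN. Qed.
Lemma predq_pmul (f g : 'M[int]_n) : predq q (pmul f g) = pmul (predq q f) (predq q g).
Proof.
apply/matrixP => i j; rewrite !mxE rmorph_sum; apply: eq_bigr => k _.
rewrite rmorph_sum; apply: eq_bigr => l _; by rewrite rmorphM /= !mxE.
Qed.

End Ev.
Section Lam.
Variable (K : fieldType) (n : nat).
Hypothesis n_gt0 : (0 < n)%N.

Lemma quotP (a' : K) : a' ^+ n = 1 ->
  let P := ('X^n - 1) %/ ('X - a'%:P) in
  (size P <= n)%N /\ P * ('X - a'%:P) = 'X^n - 1.
Proof.
move=> ha P; split.
  rewrite /P size_divp ?polyXsubC_eq0 // size_Xn_sub_1 // size_XsubC /=.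
  by rewrite subn1.
rewrite /P divpK // dvdp_XsubCl.
by rewrite /root !hornerE ha subrr.
Qed.

Lemma quot_eval (a a' : K) : a ^+ n = 1 -> a' ^+ n = 1 ->
  (('X^n - 1) %/ ('X - a'%:P)).[a] = if a == a' then n%:R * a ^+ n.-1 else 0.
Proof.
move=> ha ha'; have [_ hP] := quotP ha'.
set P := _ %/ _ in hP *.
case: eqP => [->|/eqP ne].
  have := congr1 (fun p => (deriv p).[a']) hP.
  rewrite derivM derivXsubC /= derivB derivXn derivC subr0 !hornerE subrr mulr0 add0r.
  by move=> ->; rewrite hornerMn hornerXn mulr_natl.
have := congr1 (fun p => p.[a]) hP; rewrite /= !hornerE ha subrr => /eqP.
by rewrite mulf_eq0 subr_eq0 (negbTE ne) orbF => /eqP.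
Qed.

End Lam.

Lemma peval_lam (q n : nat) (n_gt0 : (0 < n)%N) (hnq : (n%:R : 'F_q) != 0)
  (e e' : 'F_q * 'F_q) : e \in Eset q n -> e' \in Eset q n ->
  peval (lam n e') e = (e == e')%:R.
Proof.
rewrite !inE => /andP[/eqP ha /eqP hb] /andP[/eqP ha' /eqP hb'].
case: e ha hb => a b /= ha hb; case: e' ha' hb' => a' b' /= ha' hb'.
set k := a' * b' / (n%:R ^+ 2).
set P := (('X^n - 1) %/ ('X - a'%:P)).
set Q := (('X^n - 1) %/ ('X - b'%:P)).
transitivity (k * (\sum_(i < n) P`_i * a ^+ i) * (\sum_(j < n) Q`_j * b ^+ j)).
  rewrite /peval [X in _ = X * _]mulr_sumr mulr_suml; apply: eq_bigr => i _.
  rewrite mulr_sumr; apply: eq_bigr => j _; rewrite mxE /= -/k -/P -/Q; ring.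
have [sP _] := quotP n_gt0 ha'; have [sQ _] := quotP n_gt0 hb'.
rewrite -(horner_coef_wide a sP) -(horner_coef_wide b sQ) !quot_eval // xpair_eqE /k.
case: (a =P a') => [<-|]; case: (b =P b') => [<-|] /=; rewrite ?mulr0 ?mul0r //.
clear -ha hb hnq n_gt0; move: ha hb hnq; case: n n_gt0 => // m _ /= ha hb hN.
rewrite exprS in ha; rewrite exprS in hb.
have -> : a * b / m.+1%:R ^+ 2 * (m.+1%:R * a ^+ m) * (m.+1%:R * b ^+ m)
   = (a * a ^+ m) * (b * b ^+ m) * (m.+1%:R ^+ 2 / m.+1%:R ^+ 2) by ring.
by rewrite ha hb divff ?expf_neq0 // !mul1r.
Qed.
Lemma exists_prim (q n : nat) : prime q -> prime n -> (n %| q.-1)%N ->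
  exists w : 'F_q, n.-primitive_root w.
Proof.
move=> pq pn dn.
have n_gt0 := prime_gt0 pn.
have /cyclicP[g hg] := @field_unit_group_cyclic _ [set: {unit 'F_q}]%G.
have og : #[g]%g = q.-1.
  by rewrite /order -hg card_finField_unit card_Fp.
have q1_gt0 : (0 < q.-1)%N by rewrite -subn1 subn_gt0 prime_gt1.
set d := (q.-1 %/ n)%N.
have hqd : (q.-1 = d * n)%N by rewrite divnK.
have d_gt0 : (0 < d)%N by rewrite divn_gt0 // dvdn_leq.
set h := (g ^+ d)%g.
have oh : #[h]%g = n.
  by rewrite /h orderXdiv og hqd ?dvdn_mulr // mulKn.
exists (val h).
have hn : val h ^+ n = 1 by rewrite -FinRing.val_unitX -oh expg_order.
have [m pm dm] := prim_order_exists n_gt0 hn.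
have : m \in [:: 1%N; n] by rewrite !inE; case/primeP: pn => _ /(_ _ dm).
rewrite !inE => /orP[/eqP m1|/eqP mn]; last by rewrite -mn.
move: pm; rewrite m1 => /prim_expr_order; rewrite expr1 => h1.
have : h = 1%g by apply: val_inj; rewrite h1.
by move/eqP; rewrite -order_eq1 oh => /eqP n1; move: pn; rewrite n1.
Qed.

Lemma vanish1 (K : fieldType) n (rs : seq K) (f : 'I_n -> K) :
  uniq rs -> (n <= size rs)%N ->
  (forall x, x \in rs -> \sum_(i < n) f i * x ^+ i = 0) -> forall i, f i = 0.
Proof.
case: n f => [|n] f urs srs hf i; first by case: i.
pose P : {poly K} := \poly_(k < n.+1) f (inord k).
have P0 : P = 0.
  apply: (roots_geq_poly_eq0 (rs := rs)) => //; last first.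
    exact: leq_trans (size_poly _ _) srs.
  apply/allP => x xr; rewrite /root horner_poly.
  apply/eqP; rewrite -[RHS](hf x xr); apply: eq_bigr => k _; by rewrite inord_val.
have := congr1 (fun p : {poly K} => p`_i) P0.
by rewrite coef_poly ltn_ord inord_val coef0.
Qed.

Lemma vanish2 (K : fieldType) n (rs : seq K) (M : 'M[K]_n) :
  uniq rs -> (n <= size rs)%N ->
  (forall a b, a \in rs -> b \in rs ->
     \sum_(i < n) \sum_(j < n) M i j * a ^+ i * b ^+ j = 0) -> M = 0.
Proof.
move=> urs srs hM; apply/matrixP => i j; rewrite mxE.
have step1 b : b \in rs -> forall i, \sum_(j < n) M i j * b ^+ j = 0.
  move=> br; apply: (vanish1 (f := fun i => \sum_(j < n) M i j * b ^+ j) urs srs).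
  move=> x xr; rewrite -[RHS](hM x b xr br); apply: eq_bigr => k _.
  rewrite mulr_suml; apply: eq_bigr => l _; ring.
apply: (vanish1 (f := fun j => M i j) urs srs) => x xr.
rewrite -[RHS](step1 x xr i); apply: eq_bigr => l _; ring.
Qed.

Lemma quat_eq (T : Type) (X Y : quat T) :
  qc0 X = qc0 Y -> qc1 X = qc1 Y -> qc2 X = qc2 Y -> qc3 X = qc3 Y -> X = Y.
Proof. by case: X; case: Y => /= ? ? ? ? ? ? ? ? -> -> -> ->. Qed.

Lemma ev_mulG (q n : nat) (n_gt0 : (0 < n)%N) (X G : quat (Rp int n)) (e : 'F_q * 'F_q) :
  e \in Eset q n ->
  peval (predq q (qc0 G)) e = 0 -> peval (predq q (qc1 G)) e = 0 ->
  peval (predq q (qc2 G)) e = 0 -> peval (predq q (qc3 G)) e = 0 ->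
  [/\ peval (qc0 (qred q (Amul X G))) e = 0, peval (qc1 (qred q (Amul X G))) e = 0,
      peval (qc2 (qred q (Amul X G))) e = 0 & peval (qc3 (qred q (Amul X G))) e = 0].
Proof.
rewrite inE => /andP[/eqP h1 /eqP h2] g0 g1 g2 g3.
rewrite /Amul /qmul /qred /qmap /=.
rewrite !predqD !predqN !predq_pmul !pevalD !pevalN !(peval_pmul n_gt0) // g0 g1 g2 g3.
by rewrite !mulr0 !(addr0, oppr0).
Qed.

From mathcomp Require Import zify.

Lemma arith4 (t a b c d : nat) : (t <= a)%N -> (t <= b)%N -> (t <= c)%N -> (t <= d)%N ->
  [\/ (t < a)%N, (t < b)%N, (t < c)%N | (t < d)%N] -> (4 * t < a + b + c + d)%N.
Proof. move=> ? ? ? ? [] ?; lia. Qed.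

Theorem lemma7
  (n p q : nat) (hn : prime n) (hp : prime p) (hq : prime q) (hpq : p != q)
  (hcpq : coprime p q) (hcnq : coprime n q) (hnq : (n %| q.-1)%N)
  (F G Finv : quat (Rp int n))
  (hF : qternary F) (hG : qternary G)
  (T : {set 'F_q * 'F_q})
  (hT : T = [set e in Eset q n | [&& peval (predq q (qc0 G)) e == 0,
                                      peval (predq q (qc1 G)) e == 0,
                                      peval (predq q (qc2 G)) e == 0 &
                                      peval (predq q (qc3 G)) e == 0]])
  (hTne : T != set0)
  (hNF : [set e in Eset q n | peval (predq q (qnorm F)) e == 0] \subset T)
  (c : 'F_q * 'F_q -> 'F_q) (hc : forall e, e \in T -> c e != 0)
  (sigma : Rp 'F_q n) (hsigma : sigma = \sum_(e in T) c e *: lam n e)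
  (hFinv : eqmodJ sigma (Amul F Finv) (Aone n) /\ eqmodJ sigma (Amul Finv F) (Aone n))
  (W : quat 'F_q)
  (hWinv : exists W' : quat 'F_q, Lqmul W W' = Lqone q /\ Lqmul W' W = Lqone q)
  (hW0 : [/\ qc0 W != 0, qc1 W != 0, qc2 W != 0 & qc3 W != 0])
  (vartheta : quat (Rp 'F_q n))
  (hvartheta : vartheta = Aqmul (qmap (@pconst 'F_q n) W) (qscal sigma))
  (Htil : quat (Rp 'F_q n))
  (hHtil : Htil = qadd (qred q (Amul Finv G)) vartheta) :
  forall tau' : quat (Rp int n),
    (exists F' alpha' : quat (Rp int n),
        [/\ qred q (Amul F F') = qred q (qadd (Aone n) (Amul alpha' tau')),
            qred q (Amul F' F) = qred q (qadd (Aone n) (Amul alpha' tau')) &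
            Htil = qadd (qred q (Amul F' G)) (qred q tau')]) ->
    qred q tau' <> vartheta ->
    (rho_weight (qred q tau') > 4 * #|T|)%N.
Proof.
move=> tau' [F' [alpha' [_ _ hH]]] hne.
have n_gt0 := prime_gt0 hn.
have hN : (n%:R : 'F_q) != 0.
  rewrite -(dvdn_pcharf (pchar_Fp hq)) -prime_coprime // coprime_sym //.
have Tprop e : e \in T -> e \in Eset q n /\
   [/\ peval (predq q (qc0 G)) e = 0, peval (predq q (qc1 G)) e = 0,
       peval (predq q (qc2 G)) e = 0 & peval (predq q (qc3 G)) e = 0].
  by rewrite hT inE => /andP[-> /and4P[/eqP ? /eqP ? /eqP ? /eqP ?]].
have sig_eval e : e \in Eset q n -> peval sigma e = if e \in T then c e else 0.
  move=> eE; rewrite hsigma peval_sum.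
  rewrite (eq_bigr (fun e' => c e' * (e == e')%:R)); last first.
    by move=> e' he'; rewrite pevalZ peval_lam //; have [] := Tprop _ he'.
  case: (boolP (e \in T)) => eT.
    rewrite (bigD1 e) //= eqxx mulr1 big1 ?addr0 // => e' /andP[_ ne].
    by rewrite eq_sym (negbTE ne) mulr0.
  rewrite big1 // => e' e'T; have -> : (e == e') = false.
    by apply/negbTE; apply: contraNneq eT => ->.
  by rewrite mulr0.
have [w0 pw0] := exists_prim hq hn hnq.
set rs := [seq w0 ^+ k | k <- iota 0 n].
have urs : uniq rs.
  rewrite map_inj_in_uniq ?iota_uniq // => i j; rewrite !mem_iota /= !add0n => hi hj.
  by move/eqP; rewrite (eq_prim_root_expr pw0) !modn_small // => /eqP.
have srs : (n <= size rs)%N by rewrite size_map size_iota.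
have rsE x : x \in rs -> x ^+ n = 1.
  by case/mapP => k _ ->; rewrite exprAC (prim_expr_order pw0) expr1n.
have inj (D : 'M['F_q]_n) : D != 0 -> exists2 e, e \in Eset q n & peval D e != 0.
  move=> D0; apply/exists_inP; apply: contraNT D0 => /exists_inPn hD.
  apply/eqP; apply: (vanish2 urs srs) => a b ar br.
  have eE : (a, b) \in Eset q n by rewrite inE /= !rsE ?eqxx.
  by move: (hD _ eE); rewrite negbK => /eqP.
have key (tc vc : 'M['F_q]_n) (w : 'F_q) : w != 0 ->
    (forall e, e \in Eset q n -> peval vc e = w * peval sigma e) ->
    (forall e, e \in T -> peval tc e = peval vc e) ->
    (#|T| <= #|[set e in Eset q n | peval tc e != 0%R]|)%N /\
    (tc != vc -> (#|T| < #|[set e in Eset q n | peval tc e != 0%R]|)%N).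
  move=> w0n hv ht.
  have sub : T \subset [set e in Eset q n | peval tc e != 0].
    apply/subsetP => e eT; have [eE _] := Tprop _ eT.
    by rewrite inE eE /= ht // hv // sig_eval // eT mulf_neq0 // hc.
  split; first exact: subset_leq_card.
  move=> ne; have : tc - vc != 0 by rewrite subr_eq0.
  move=> /inj [e eE he].
  have eT : e \notin T.
    by apply: contra he => eT; rewrite pevalB ht // subrr.
  have sub' : e |: T \subset [set e in Eset q n | peval tc e != 0].
    rewrite subUset sub andbT sub1set inE eE /=.
    by move: he; rewrite pevalB hv // sig_eval // (negbTE eT) mulr0 subr0.
  by move: (subset_leq_card sub'); rewrite cardsU1 eT.
have hHH := hH; rewrite hHtil in hHH.
have agree e : e \in T ->
   [/\ peval (qc0 (qred q tau')) e = peval (qc0 vartheta) e,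
       peval (qc1 (qred q tau')) e = peval (qc1 vartheta) e,
       peval (qc2 (qred q tau')) e = peval (qc2 vartheta) e &
       peval (qc3 (qred q tau')) e = peval (qc3 vartheta) e].
  move=> eT; have [eE [g0 g1 g2 g3]] := Tprop _ eT.
  have [a0 a1 a2 a3] := ev_mulG n_gt0 Finv eE g0 g1 g2 g3.
  have [b0 b1 b2 b3] := ev_mulG n_gt0 F' eE g0 g1 g2 g3.
  have c0 := congr1 (fun X => peval (qc0 X) e) hHH.
  have c1 := congr1 (fun X => peval (qc1 X) e) hHH.
  have c2 := congr1 (fun X => peval (qc2 X) e) hHH.
  have c3 := congr1 (fun X => peval (qc3 X) e) hHH.
  move: c0 c1 c2 c3; rewrite /qadd /= !pevalD.
  move: a0 a1 a2 a3 b0 b1 b2 b3; rewrite /qred /qmap /= => -> -> -> -> -> -> -> ->.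
  by rewrite !add0r => -> -> -> ->.
have veval e : e \in Eset q n ->
   [/\ peval (qc0 vartheta) e = qc0 W * peval sigma e,
       peval (qc1 vartheta) e = qc1 W * peval sigma e,
       peval (qc2 vartheta) e = qc2 W * peval sigma e &
       peval (qc3 vartheta) e = qc3 W * peval sigma e].
  rewrite inE => /andP[/eqP h1 /eqP h2].
  rewrite hvartheta /Aqmul /qmul /qscal /qmap /=.
  by rewrite !pevalD !pevalN !(peval_pmul n_gt0) // !peval_pconst // !peval0;
    split; ring.
have [w0' w1' w2' w3'] := hW0.
have [k0 k0'] := key (qc0 (qred q tau')) (qc0 vartheta) _ w0'
  (fun e eE => let: And4 h _ _ _ := veval e eE in h)
  (fun e eT => let: And4 h _ _ _ := agree e eT in h).
have [k1 k1'] := key (qc1 (qred q tau')) (qc1 vartheta) _ w1'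
  (fun e eE => let: And4 _ h _ _ := veval e eE in h)
  (fun e eT => let: And4 _ h _ _ := agree e eT in h).
have [k2 k2'] := key (qc2 (qred q tau')) (qc2 vartheta) _ w2'
  (fun e eE => let: And4 _ _ h _ := veval e eE in h)
  (fun e eT => let: And4 _ _ h _ := agree e eT in h).
have [k3 k3'] := key (qc3 (qred q tau')) (qc3 vartheta) _ w3'
  (fun e eE => let: And4 _ _ _ h := veval e eE in h)
  (fun e eT => let: And4 _ _ _ h := agree e eT in h).
rewrite /rho_weight; apply: arith4 k0 k1 k2 k3 _.
have [d0|/k0' d0] := eqVneq (qc0 (qred q tau')) (qc0 vartheta); last exact: Or41.
have [d1|/k1' d1] := eqVneq (qc1 (qred q tau')) (qc1 vartheta); last exact: Or42.
have [d2|/k2' d2] := eqVneq (qc2 (qred q tau')) (qc2 vartheta); last exact: Or43.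
have [d3|/k3' d3] := eqVneq (qc3 (qred q tau')) (qc3 vartheta); last exact: Or44.
by case: hne; apply: quat_eq.
Qed.
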